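(* Let $p\in(0,1)$ and let $X$, $\gamma$ satisfy the standing assumptions in the context. Then $\inf\{\mathrm{VaR}_p(g(X)):g\in\mathcal G_{\rm cm}\}=-\infty$. Hence the problem of minimizing $\mathrm{VaR}_p(g(X))$ over $g\in\mathcal G_{\rm cm}$ admits no solution.
   Context: $(\Omega,\mathcal F,\mathbb P)$ is atomless. $\mathrm{VaR}_p(Y)=\inf\{x:\mathbb P(Y\le x)\ge p\}$. Standing assumptions: $X\ge0$ is a random variable whose distribution has a positive density on its support; $\gamma:\mathbb R\to\mathbb R$ is continuous and strictly positive with $\mathbb E[\gamma(X)]=1$ and $\mathbb E[\gamma(X)X]<\infty$. With $\mathcal G_1$ the measurable functions $\mathbb R\to\mathbb R$ and a budget $x_0\in\mathbb R$, $\mathcal G_{\rm cm}=\{g\in\mathcal G_1:\mathbb E[\gamma(X)g(X)]\ge x_0\}$. *)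

(* Defs.v *)
From HB Require Import structures.
From mathcomp Require Import all_boot all_order all_algebra.
From mathcomp Require Import all_classical all_reals all_analysis.
Set Implicit Arguments. Unset Strict Implicit. Unset Printing Implicit Defensive.
Import Order.TTheory GRing.Theory Num.Theory.
Import numFieldNormedType.Exports.
Local Open Scope classical_set_scope.
Local Open Scope ring_scope.
Local Open Scope ereal_scope.

Definition atomless {R : realType} {d : measure_display} {T : measurableType d}
  (P : probability T R) : Prop :=
  forall A : set T, measurable A -> 0 < P A ->
    exists B : set T, [/\ measurable B, B `<=` A, 0 < P B & P B < P A].

Definition VaR {R : realType} {d : measure_display} {T : measurableType d}
  (P : probability T R) (p : R) (Y : T -> R) : \bar R :=
  ereal_inf [set x%:E | x in [set x : R | p%:E <= P [set w | (Y w <= x)%R]]].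

Definition law_support {R : realType} {d : measure_display} {T : measurableType d}
  (P : probability T R) (X : T -> R) : set R :=
  [set x | forall e : R, (0 < e)%R ->
     0 < P (X @^-1` `](x - e)%R, (x + e)%R[)].

Definition has_pos_density {R : realType} {d : measure_display} {T : measurableType d}
  (P : probability T R) (X : T -> R) : Prop :=
  exists f : R -> R,
    [/\ measurable_fun setT f,
        (forall x, (0 <= f x)%R),
        (forall A : set R, measurable A ->
           P (X @^-1` A) = \int[lebesgue_measure]_(x in A) (f x)%:E) &
        (forall x, law_support P X x -> (0 < f x)%R)].

Definition G_cm {R : realType} {d : measure_display} {T : measurableType d}
  (P : probability T R) (X : T -> R) (gamma : R -> R) (x0 : R) : set (R -> R) :=
  [set g | [/\ measurable_fun setT g,
              P.-integrable setT (fun w => (gamma (X w) * g (X w))%:E) &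
              x0%:E <= \int[P]_w (gamma (X w) * g (X w))%:E]].

(* Main.v *)
Require Import Defs.
Set Warnings "-all".
From HB Require Import structures.
From mathcomp Require Import all_boot all_order all_algebra.
From mathcomp Require Import all_classical all_reals all_analysis.
From mathcomp Require Import measurable_realfun.
From mathcomp Require Import ring lra.
Import Order.TTheory GRing.Theory Num.Theory.
Import numFieldNormedType.Exports.
Local Open Scope classical_set_scope.
Local Open Scope ring_scope.
Local Open Scope ereal_scope.
Lemma mle (R : realType) (d : measure_display) (T : measurableType d) (Y : T -> R) x :
  measurable_fun setT Y -> measurable [set w | (Y w <= x)%R].
Proof.
move=> mY; have := mY measurableT _ (measurable_itv `]-oo, x]).
by rewrite setTI; congr measurable; apply/seteqP; split => w /=; rewrite in_itv /= andbT.
Qed.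
Lemma mlt (R : realType) (d : measure_display) (T : measurableType d) (Y : T -> R) x :
  measurable_fun setT Y -> measurable [set w | (Y w < x)%R].
Proof.
move=> mY; have := mY measurableT _ (measurable_itv `]-oo, x[).
by rewrite setTI; congr measurable; apply/seteqP; split => w /=; rewrite in_itv /= andbT.
Qed.
Lemma vaR_gt (R : realType) (d : measure_display) (Omega : measurableType d)
  (P : probability Omega R) (Y : Omega -> R) (p : R) :
  measurable_fun setT Y -> (0 < p)%R -> VaR P p Y != -oo.
Proof.
move=> mY p0; apply/eqP => hV.
have key : forall M : R, p%:E <= P [set w | (Y w <= M)%R].
  move=> M.
  have : VaR P p Y < M%:E by rewrite hV ltNyr.
  move=> /ereal_inf_lt[_ [x hx <-]]; rewrite lte_fin => xM.
  apply: (le_trans hx); apply: le_measure; rewrite ?inE; try exact: mle.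
  by move=> w /= /le_trans; apply; rewrite ltW.
pose F n := [set w | (Y w <= - n%:R)%R].
have mF : forall n, measurable (F n) by move=> n; exact: mle.
have F0 : P (F 0%N) < +oo by rewrite (le_lt_trans (probability_le1 _ _)) ?ltry.
have capF : \bigcap_n F n = set0.
  apply/seteqP; split => // w /= hw.
  have [n hn] : exists n : nat, (- Y w < n%:R)%R.
    exists (Num.trunc (- Y w)).+1; exact: truncnS_gt.
  by have := hw n I; rewrite /F /= lerNr leNgt hn.
have niF : nonincreasing_seq F.
  move=> m n mn; apply/subsetPset => w; rewrite /F /= => /le_trans; apply.
  by rewrite lerN2 ler_nat.
have mcap : measurable (\bigcap_n F n) by rewrite capF.
have cv := @nonincreasing_cvg_mu _ _ _ P F F0 mF mcap niF.
rewrite capF measure0 in cv.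
have : p%:E <= lim (P \o F @ \oo).
  by apply: lime_ge; [exact: cvgP cv | apply: nearW => n; exact: key].
move=> H; move: H.
by rewrite (cvg_lim _ cv) // lee_fin leNgt p0.
Qed.
Lemma no_atom (R : realType) (d : measure_display) (Omega : measurableType d)
  (P : probability Omega R) (X : Omega -> R) :
  has_pos_density P X -> forall a : R, P (X @^-1` [set a]) = 0.
Proof.
move=> [f [mf _ hP _]] a.
rewrite hP//; apply: null_set_integral => //.
  apply/measurable_EFinP; exact: measurable_funTS.
exact: lebesgue_measure_set1.
Qed.


Lemma key_a (R : realType) (d : measure_display) (Omega : measurableType d)
  (P : probability Omega R) (X : Omega -> R) (p : R) :
  measurable_fun setT X -> (forall w, (0 <= X w)%R) ->
  (forall a : R, P (X @^-1` [set a]) = 0) -> (0 < p < 1)%R ->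
  exists a : R, p%:E <= P [set w | (X w <= a)%R] /\ P [set w | (X w <= a)%R] < 1.
Proof.
move=> mX X0 noat /andP[p0 p1].
pose S := [set a : R | p%:E <= P [set w | (X w <= a)%R]].
have neS : nonempty S.
  apply/not_existsP => hn.
  pose F n := [set w | (X w <= n%:R)%R].
  have mF : forall n, measurable (F n) by move=> n; exact: mle.
  have cupF : \bigcup_n F n = setT.
    apply/seteqP; split => // w _.
    exists (Num.trunc (X w)).+1 => //; rewrite /F /=; exact/ltW/truncnS_gt.
  have mcup : measurable (\bigcup_n F n) by rewrite cupF.
  have ndF : nondecreasing_seq F.
    move=> m n mn; apply/subsetPset => w; rewrite /F /= => /le_trans; apply.
    by rewrite ler_nat.
  have cv := @nondecreasing_cvg_mu _ _ _ P F mF mcup ndF.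
  have P1 : P setT = 1 by exact: probability_setT.
  have {}cv : P \o F @ \oo --> 1 by rewrite -P1 -cupF; exact: cv.
  have : lim (P \o F @ \oo) <= p%:E.
    apply: lime_le; first exact: cvgP cv.
    apply: nearW => n /=; apply/ltW; rewrite ltNge; apply/negP => h.
    exact: (hn n%:R).
  by rewrite (cvg_lim _ cv) // lee_fin leNgt p1.
have lbS : lbound S 0%R.
  move=> s Ss; rewrite leNgt; apply/negP => s0; move: Ss; rewrite /S /=.
  rewrite (_ : [set w | _] = set0) ?measure0 ?lee_fin ?leNgt ?p0 //.
  apply/seteqP; split => // w /= h; have := X0 w.
  by rewrite leNgt (le_lt_trans h s0).
have hinf : has_inf S by split => //; exists 0%R.
pose a := inf S.
have ha1 : p%:E <= P [set w | (X w <= a)%R].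
  pose G n := [set w | (X w <= a + n.+1%:R^-1)%R].
  have mG : forall n, measurable (G n) by move=> n; exact: mle.
  have G0 : P (G 0%N) < +oo by rewrite (le_lt_trans (probability_le1 _ _)) ?ltry.
  have capG : \bigcap_n G n = [set w | (X w <= a)%R].
    apply/seteqP; split => w /=.
      move=> h; rewrite leNgt; apply/negP => /ltr_add_invr[k hk].
      by have := h k I; rewrite /G /= leNgt hk.
    by move=> h n _; rewrite /G /= (le_trans h) // lerDl.
  have mcap : measurable (\bigcap_n G n) by rewrite capG; exact: mle.
  have niG : nonincreasing_seq G.
    move=> m n mn; apply/subsetPset => w; rewrite /G /= => /le_trans; apply.
    by rewrite lerD2l lef_pV2 ?posrE // ler_nat.
  have cv := @nonincreasing_cvg_mu _ _ _ P G G0 mG mcap niG.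
  rewrite capG in cv.
  rewrite -(cvg_lim _ cv) //; apply: lime_ge; first exact: cvgP cv.
  apply: nearW => n /=.
  have e0 : (0 < n.+1%:R^-1 :> R)%R by rewrite invr_gt0 ltr0Sn.
  have [e Se he] := inf_adherent e0 hinf.
  apply: (le_trans Se); apply: le_measure; rewrite ?inE; try exact: mle.
  by move=> w /= /le_trans; apply; rewrite ltW.
have ha2 : P [set w | (X w < a)%R] <= p%:E.
  pose G n := [set w | (X w <= a - n.+1%:R^-1)%R].
  have mG : forall n, measurable (G n) by move=> n; exact: mle.
  have cupG : \bigcup_n G n = [set w | (X w < a)%R].
    apply/seteqP; split => w /=.
      move=> [n _]; rewrite /G /= => /le_lt_trans; apply.
      by rewrite ltrBlDr ltrDl.
    move=> /ltr_add_invr[k hk]; exists k => //; rewrite /G /=.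
    by rewrite lerBrDr ltW.
  have mcup : measurable (\bigcup_n G n) by rewrite cupG; exact: mlt.
  have ndG : nondecreasing_seq G.
    move=> m n mn; apply/subsetPset => w; rewrite /G /= => /le_trans; apply.
    by rewrite lerD2l lerN2 lef_pV2 ?posrE // ler_nat.
  have cv := @nondecreasing_cvg_mu _ _ _ P G mG mcup ndG.
  rewrite cupG in cv.
  rewrite -(cvg_lim _ cv) //; apply: lime_le; first exact: cvgP cv.
  apply: nearW => n /=; apply/ltW; rewrite ltNge; apply/negP => h.
  have : (a <= a - n.+1%:R^-1)%R by apply: ge_inf => //; exists 0%R.
  by rewrite lerBrDr gerDl leNgt invr_gt0 ltr0Sn.
exists a; split => //.
have -> : [set w | (X w <= a)%R] = [set w | (X w < a)%R] `|` X @^-1` [set a].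
  apply/seteqP; split => w /=.
    by rewrite le_eqVlt => /orP[/eqP ->|->]; [right|left].
  by move=> [/ltW|->].
rewrite measureU.
  apply: (@le_lt_trans _ _ (p%:E + 0)); last by rewrite adde0 lte_fin.
  apply: leeD => //; rewrite le_eqVlt; apply/orP; left; apply/eqP; exact: noat.
- exact: mlt.
- by rewrite -[X @^-1` _]setTI; apply: mX => //.
- apply/seteqP; split => // w /= [h hw]; by rewrite hw ltxx in h.
Qed.
Lemma mgt (R : realType) (d : measure_display) (T : measurableType d) (Y : T -> R) x :
  measurable_fun setT Y -> measurable [set w | (x < Y w)%R].
Proof.
move=> mY; have := mY measurableT _ (measurable_itv `]x, +oo[).
by rewrite setTI; congr measurable; apply/seteqP; split => w /=; rewrite in_itv /= andbT.
Qed.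

Lemma ninfty (R : realType) (x : \bar R) : (forall M : R, x <= M%:E) -> x = -oo.
Proof.
case: x => [r||] h //.
- by have := h (r - 1)%R; rewrite lee_fin => h1; exfalso; clear h; lra.
- by have := h 0%R.
Qed.

Theorem proposition3 (R : realType) (d : measure_display) (Omega : measurableType d)
  (P : probability Omega R) (X : Omega -> R) (gamma : R -> R) (x0 p : R) :
  atomless P ->
  measurable_fun setT X ->
  (forall w, (0 <= X w)%R) ->
  has_pos_density P X ->
  continuous gamma ->
  (forall x, (0 < gamma x)%R) ->
  \int[P]_w (gamma (X w))%:E = 1 ->
  \int[P]_w (gamma (X w) * X w)%:E < +oo ->
  (0 < p < 1)%R ->
  ereal_inf [set VaR P p (g \o X) | g in G_cm P X gamma x0] = -oo /\
  ~ (exists2 g, G_cm P X gamma x0 g &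
       forall h, G_cm P X gamma x0 h -> VaR P p (g \o X) <= VaR P p (h \o X)).
Proof.
move=> _ mX X0 hd hc gpos hint1 _ hp.
have mg : measurable_fun setT gamma := continuous_measurable_fun hc.
have mgX : measurable_fun setT (gamma \o X) := measurableT_comp mg mX.
have igX : P.-integrable setT (fun w => (gamma (X w))%:E).
  apply/integrableP; split; first exact/measurable_EFinP.
  rewrite (eq_integral (fun w => (gamma (X w))%:E)); first by rewrite hint1 ltry.
  by move=> w _; rewrite abse_EFin ger0_norm // ltW.
have [a [ha1 ha2]] := @key_a _ _ _ P X p mX X0 (@no_atom _ _ _ P X hd) hp.
pose A := [set w | (a < X w)%R].
have mA : measurable A by exact: mgt.
have Ffin : P [set w | (X w <= a)%R] \is a fin_num by rewrite fin_num_measure //; exact: (@mle _ _ _ X a).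
pose c := (1 - fine (P [set w | (X w <= a)%R]))%R.
have PA : P A = c%:E.
  rewrite (_ : A = ~` [set w | (X w <= a)%R]); last first.
    apply/seteqP; split => w /=; rewrite /A /=.
      by rewrite ltNge => /negP.
    by move=> /negP; rewrite -ltNge.
  by rewrite probability_setC ?EFinB ?fineK //; exact: mle.
have c0 : (0 < c)%R.
  by move: ha2; rewrite -(fineK Ffin) lte_fin /c subr_gt0.
have hcV : continuous (fun x => (gamma x)^-1)%R.
  by move=> x; apply: cvgV; [rewrite gt_eqF | exact: hc].
have H : forall M : R, exists2 g, G_cm P X gamma x0 g & VaR P p (g \o X) <= M%:E.
  move=> M.
  pose K := ((`|x0| + `|M|) / c)%R.
  pose g := fun x => (M + K * (\1_[set y | (a < y)%R] x * (gamma x)^-1))%R.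
  have mgg : measurable_fun setT g.
    apply: measurable_funD; first exact: measurable_cst.
    apply: measurable_funM; first exact: measurable_cst.
    apply: measurable_funM; last exact: continuous_measurable_fun.
    apply: measurable_indic.
    rewrite (_ : [set y | (a < y)%R] = `]a, +oo[%classic); first exact: measurable_itv.
    by apply/seteqP; split => y /=; rewrite in_itv /= andbT.
  have heq : forall w, (gamma (X w) * g (X w) = M * gamma (X w) + K * \1_A w)%R.
    move=> w; rewrite /g !indicE.
    have gn0 : gamma (X w) != 0%R by rewrite gt_eqF.
    have [h|h] := pselect (a < X w)%R.
      rewrite (mem_set (h : [set y | (a < y)%R] (X w))) (mem_set (h : A w)).
      by rewrite mul1r mulrDr mulrCA mulfV // mulr1 mulrC.
    rewrite (memNset (h : ~ [set y | (a < y)%R] (X w))) (memNset (h : ~ A w)).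
    by rewrite !mul0r mulr0 addr0 mulrC addr0.
  have i1 : P.-integrable setT (EFin \o (fun w => M * gamma (X w))%R).
    apply: (eq_integrable _ _ _ _ (integrableZl _ M igX)) => // w _.
  have i2 : P.-integrable setT (EFin \o (fun w => K * \1_A w)%R).
    apply: (eq_integrable _ _ _ _ (integrableZl _ K (integrable_indic P mA))) => // w _.
  have feq : (fun w => (gamma (X w) * g (X w))%:E) =
      (EFin \o (fun w => M * gamma (X w))%R) \+ (EFin \o (fun w => K * \1_A w)%R).
    by apply/funext => w /=; rewrite heq EFinD.
  have ig : P.-integrable setT (fun w => (gamma (X w) * g (X w))%:E).
    by rewrite feq; exact: integrableD.
  exists g.
    split => //.
    rewrite feq integralD_EFin //.
    rewrite (eq_integral (fun w => M%:E * (gamma (X w))%:E)); last first.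
      by move=> w _; rewrite /= EFinM.
    rewrite integralZl // hint1.
    rewrite (eq_integral (fun w => K%:E * (\1_A w)%:E)); last first.
      by move=> w _; rewrite /= EFinM.
    have PA2 : \int[P]_x (\1_A x)%:E = c%:E by rewrite integral_indic // setIT; exact: PA.
    rewrite integralZl ?PA2 //; last exact: integrable_indic.
    rewrite mule1 -EFinM -EFinD lee_fin /K divfK ?gt_eqF //.
    have h2 := ler_norm x0; have := ler_norm (- M); rewrite normrN => h3.
    lra.
  rewrite /VaR; apply: ereal_inf_lbound; exists M => //.
  apply: (le_trans ha1); apply: le_measure; rewrite ?inE.
  - exact: mle.
  - by apply: mle; exact: measurableT_comp.
  - move=> w /= h; rewrite /g indicE memNset ?mul0r ?mulr0 ?addr0 //=.
    by rewrite ltNge h.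
split.
  apply: ninfty => M; have [g Gg hg] := H M.
  apply: le_trans hg; apply: ereal_inf_lbound; by exists g.
move=> [g Gg hmin].
have mg' : measurable_fun setT g by case: Gg.
have := @vaR_gt _ _ _ P (g \o X) p (measurableT_comp mg' mX) (andP hp).1.
rewrite (@ninfty _ (VaR P p (g \o X))) //.
move=> M; have [h Gh hh] := H M; exact: le_trans (hmin h Gh) hh.
Qed.
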